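(* The set of singular points of the singularity variety $V=0$ in $\mathbb{R}^{12}$ remains invariant under affine motions: for every invertible $2\times2$ real matrix $\mathbf{A}$ and every $\mathbf{a}\in\mathbb{R}^2$, the map $(\mathbf{k}'_1,\dots,\mathbf{k}'_6)\mapsto(\mathbf{A}\mathbf{k}'_1+\mathbf{a},\dots,\mathbf{A}\mathbf{k}'_6+\mathbf{a})$ maps singular points of $V=0$ to singular points of $V=0$ (and regular points to regular points).
   Context: A configuration is $K'=(\mathbf{k}'_1,\dots,\mathbf{k}'_6)$ with $\mathbf{k}'_i=(c_i,d_i)^T\in\mathbb{R}^2$, viewed as a point of $\mathbb{R}^{12}$. The singularity polynomial is $V(K')=\det\mathbf{V}(K')$, where $\mathbf{V}(K')$ is the $3\times3$ matrix whose $i$-th column ($i=1,2,3$) consists of the two coordinates of $\mathbf{k}'_{i+3}-\mathbf{k}'_i$ followed by the entry $\det(\mathbf{k}'_i,\mathbf{k}'_{i+3}-\mathbf{k}'_i)$ (the $2\times2$ determinant of the two column vectors). A singular point of the hypersurface $V=0$ is a point of $\mathbb{R}^{12}$ where $V$ and all its partial derivatives with respect to $c_1,\dots,c_6,d_1,\dots,d_6$ vanish. *)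

(* Defs.v *)
From HB Require Import structures.
From mathcomp Require Import all_boot all_order all_algebra.
From mathcomp Require Import mpoly.
Set Implicit Arguments. Unset Strict Implicit. Unset Printing Implicit Defensive.
Import Order.TTheory GRing.Theory Num.Theory.
Local Open Scope ring_scope.

(* Coordinates of R^12: variable i (i < 6) is c_{i+1}, variable 6+i is d_{i+1}. *)
Definition cidx (i : 'I_6) : 'I_12 := lshift 6 i.
Definition didx (i : 'I_6) : 'I_12 := rshift 6 i.

Section Sing.
Variable R : realFieldType.

Definition cX (i : 'I_6) : {mpoly R[12]} := 'X_(cidx i).
Definition dX (i : 'I_6) : {mpoly R[12]} := 'X_(didx i).

(* i-th column (i = 0,1,2, i.e. paper's i = 1,2,3): k'_{i+3} - k'_i and
   det(k'_i, k'_{i+3} - k'_i) = c_i (d_{i+3}-d_i) - d_i (c_{i+3}-c_i). *)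
Definition Vmx : 'M[{mpoly R[12]}]_3 :=
  \matrix_(r < 3, j < 3)
    let i  : 'I_6 := widen_ord (isT : 3 <= 6)%N j in
    let i3 : 'I_6 := rshift 3 j in
    let dc := cX i3 - cX i in
    let dd := dX i3 - dX i in
    if r == 0 :> nat then dc
    else if r == 1 :> nat then dd
    else cX i * dd - dX i * dc.

Definition Vpoly : {mpoly R[12]} := \det Vmx.

Definition singular_point (x : 'I_12 -> R) : Prop :=
  Vpoly.@[x] = 0 /\ forall k : 'I_12, (Vpoly^`M(k)).@[x] = 0.

Definition affine_map (A : 'M[R]_2) (a : 'cV[R]_2) (x : 'I_12 -> R)
    : 'I_12 -> R :=
  fun k =>
    let j : 'I_6 := match split (k : 'I_(6 + 6)) with inl i => i | inr i => i end in
    let r : 'I_2 := match split (k : 'I_(6 + 6)) with inl _ => 0 | inr _ => 1 end in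
    A r 0 * x (cidx j) + A r 1 * x (didx j) + a r 0.
End Sing.

(* Main.v *)
Require Import Defs.
From HB Require Import structures.
From mathcomp Require Import all_boot all_order all_algebra.
From mathcomp Require Import mpoly.
From mathcomp Require Import ring.
Import Order.TTheory GRing.Theory Num.Theory.
Local Open Scope ring_scope.

Lemma det2E (R : comNzRingType) (M : 'M[R]_2) :
  \det M = M 0 0 * M 1 1 - M 0 1 * M 1 0.
Proof.
pose f (i j : nat) := M (inord i) (inord j).
have HM : forall i j, M i j = f i j by move=> i j; rewrite /f !inord_val.
rewrite (expand_det_row _ ord0) !big_ord_recr big_ord0 /cofactor /=.
rewrite !det_mx11 !mxE !HM /=; ring.
Qed.
Lemma det3E (R : comNzRingType) (M : 'M[R]_3) :
  \det M = M 0 0 * (M 1 1 * M 2 2 - M 1 2 * M 2 1)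
         - M 0 1 * (M 1 0 * M 2 2 - M 1 2 * M 2 0)
         + M 0 2 * (M 1 0 * M 2 1 - M 1 1 * M 2 0).
Proof.
pose f (i j : nat) := M (inord i) (inord j).
have HM : forall i j, M i j = f i j by move=> i j; rewrite /f !inord_val.
rewrite (expand_det_row _ ord0) !big_ord_recr big_ord0 /cofactor /=.
rewrite !det2E !mxE !HM /=; ring.
Qed.

Lemma mevalXd (R : comNzRingType) n (v : 'I_n -> R) (i j : 'I_n) :
  (('X_i : {mpoly R[n]})^`M(j)).@[v] = (val i == val j)%:R.
Proof.
rewrite mderivX mevalZ mnm1E.
case: (eqVneq i j) => [->|ne].
  rewrite eqxx. 
  have -> : (U_(j) - U_(j) = 0)%MM.
    apply/mnmP=> k. rewrite mnmBE subnn mnm0E. done.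
  by rewrite mpolyX0 meval1 mulr1.
by rewrite mul0r; move: ne; rewrite -(inj_eq val_inj) => /negbTE ->.
Qed.

Section K.
Variable R : realFieldType.
Definition xc (v : 'I_12 -> R) (n : nat) := v (cidx (inord n)).
Definition xd (v : 'I_12 -> R) (n : nat) := v (didx (inord n)).
Arguments xc : simpl never.
Arguments xd : simpl never.
Lemma xcE v i : v (cidx i) = xc v (val i). Proof. by rewrite /xc inord_val. Qed.
Lemma xdE v i : v (didx i) = xd v (val i). Proof. by rewrite /xd inord_val. Qed.

Lemma affc (A : 'M[R]_2) (a : 'cV[R]_2) v i : affine_map A a v (cidx i) = A 0 0 * v (cidx i) + A 0 1 * v (didx i) + a 0 0.
Proof. by rewrite /affine_map /cidx (unsplitK (inl i)). Qed.
Lemma affd (A : 'M[R]_2) (a : 'cV[R]_2) v i : affine_map A a v (didx i) = A 1 0 * v (cidx i) + A 1 1 * v (didx i) + a 1 0.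
Proof. by rewrite /affine_map /didx (unsplitK (inr i)). Qed.


Definition det3 {T : comNzRingType} (a b c d e f g h i : T) :=
  a * (e * i - f * h) - b * (d * i - f * g) + c * (d * h - e * g).

Fact Uc_key : unit. Proof. exact: tt. Qed.
Fact Vd_key : unit. Proof. exact: tt. Qed.
Fact Ww_key : unit. Proof. exact: tt. Qed.
Definition Uc := locked_with Uc_key (fun j : 'I_3 => cX R (rshift 3 j) - cX R (widen_ord (isT : 3 <= 6)%N j)).
Definition Vd := locked_with Vd_key (fun j : 'I_3 => dX R (rshift 3 j) - dX R (widen_ord (isT : 3 <= 6)%N j)).
Definition Ww := locked_with Ww_key (fun j : 'I_3 => cX R (widen_ord (isT : 3 <= 6)%N j) * Vd j - dX R (widen_ord (isT : 3 <= 6)%N j) * Uc j).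
Lemma UcE j : Uc j = cX R (rshift 3 j) - cX R (widen_ord (isT : 3 <= 6)%N j). Proof. by rewrite /Uc unlock. Qed.
Lemma VdE j : Vd j = dX R (rshift 3 j) - dX R (widen_ord (isT : 3 <= 6)%N j). Proof. by rewrite /Vd unlock. Qed.
Lemma WwE j : Ww j = cX R (widen_ord (isT : 3 <= 6)%N j) * Vd j - dX R (widen_ord (isT : 3 <= 6)%N j) * Uc j. Proof. by rewrite /Ww unlock. Qed.

Lemma VpolyE : Vpoly R = det3 (Uc 0) (Uc 1) (Uc 2) (Vd 0) (Vd 1) (Vd 2) (Ww 0) (Ww 1) (Ww 2).
Proof. by rewrite /Vpoly det3E !mxE !WwE !UcE !VdE /=. Qed.

Lemma ev_det3 (a b c d e f g h i : {mpoly R[12]}) k v :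
  let E p := p.@[v] in let D (p : {mpoly R[12]}) := (p^`M(k)).@[v] in
  ((det3 a b c d e f g h i)^`M(k)).@[v] =
    det3 (D a) (D b) (D c) (E d) (E e) (E f) (E g) (E h) (E i)
  + det3 (E a) (E b) (E c) (D d) (D e) (D f) (E g) (E h) (E i)
  + det3 (E a) (E b) (E c) (E d) (E e) (E f) (D g) (D h) (D i).
Proof.
move=> E D; rewrite /det3 /D /E.
rewrite !(mderivD, mderivN, mderivM) !(mevalD, mevalN, mevalM).
ring.
Qed.

Lemma evU j v : (Uc j).@[v] = v (cidx (rshift 3 j)) - v (cidx (widen_ord (isT : 3 <= 6)%N j)).
Proof. by rewrite UcE /cX mevalB !mevalXU. Qed.
Lemma evV j v : (Vd j).@[v] = v (didx (rshift 3 j)) - v (didx (widen_ord (isT : 3 <= 6)%N j)).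
Proof. by rewrite VdE /dX mevalB !mevalXU. Qed.
Lemma evW j v : (Ww j).@[v] = v (cidx (widen_ord (isT : 3 <= 6)%N j)) * (Vd j).@[v] - v (didx (widen_ord (isT : 3 <= 6)%N j)) * (Uc j).@[v].
Proof. by rewrite WwE /cX /dX mevalB !mevalM !mevalXU. Qed.
Lemma dU j k v : ((Uc j)^`M(k)).@[v] = (val (cidx (rshift 3 j)) == val k)%:R - (val (cidx (widen_ord (isT : 3 <= 6)%N j)) == val k)%:R.
Proof. by rewrite UcE /cX mderivB mevalB !mevalXd. Qed.
Lemma dV j k v : ((Vd j)^`M(k)).@[v] = (val (didx (rshift 3 j)) == val k)%:R - (val (didx (widen_ord (isT : 3 <= 6)%N j)) == val k)%:R.
Proof. by rewrite VdE /dX mderivB mevalB !mevalXd. Qed.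
Lemma dW j k v : ((Ww j)^`M(k)).@[v] =
   (val (cidx (widen_ord (isT : 3 <= 6)%N j)) == val k)%:R * (v (didx (rshift 3 j)) - v (didx (widen_ord (isT : 3 <= 6)%N j)))
 + v (cidx (widen_ord (isT : 3 <= 6)%N j)) * ((val (didx (rshift 3 j)) == val k)%:R - (val (didx (widen_ord (isT : 3 <= 6)%N j)) == val k)%:R)
 - ((val (didx (widen_ord (isT : 3 <= 6)%N j)) == val k)%:R * (v (cidx (rshift 3 j)) - v (cidx (widen_ord (isT : 3 <= 6)%N j)))
 + v (didx (widen_ord (isT : 3 <= 6)%N j)) * ((val (cidx (rshift 3 j)) == val k)%:R - (val (cidx (widen_ord (isT : 3 <= 6)%N j)) == val k)%:R)).
Proof.
rewrite WwE VdE UcE /cX /dX !(mderivB, mderivM) !(mevalB, mevalD, mevalM).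
by rewrite !mevalXd !mevalXU.
Qed.

Lemma keyc (A : 'M[R]_2) a v j :
  (\det A)^+2 * ((Vpoly R)^`M(cidx j)).@[v] =
  A 0 0 * ((Vpoly R)^`M(cidx j)).@[affine_map A a v] + A 1 0 * ((Vpoly R)^`M(didx j)).@[affine_map A a v].
Proof.
rewrite VpolyE !ev_det3.
cbv zeta beta.
rewrite !dW. rewrite !dU !dV. rewrite !evW !evU !evV.
rewrite !affc !affd !(xcE v) !(xdE v) det2E.
have m1 : (1 %% 3 = 1)%N by [].
have m2 : ((1 + 1) %% 3 = 2)%N by [].
case: j => [[|[|[|[|[|[|//]]]]]] p]; rewrite /= ?m1 ?m2 /= /det3.
all: ring.
Qed.
Lemma keyd (A : 'M[R]_2) a v j :
  (\det A)^+2 * ((Vpoly R)^`M(didx j)).@[v] =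
  A 0 1 * ((Vpoly R)^`M(cidx j)).@[affine_map A a v] + A 1 1 * ((Vpoly R)^`M(didx j)).@[affine_map A a v].
Proof.
rewrite VpolyE !ev_det3.
cbv zeta beta.
rewrite !dW. rewrite !dU !dV. rewrite !evW !evU !evV.
rewrite !affc !affd !(xcE v) !(xdE v) det2E.
have m1 : (1 %% 3 = 1)%N by [].
have m2 : ((1 + 1) %% 3 = 2)%N by [].
case: j => [[|[|[|[|[|[|//]]]]]] p]; rewrite /= ?m1 ?m2 /= /det3.
all: ring.
Qed.

Lemma ev_det3v (a b c d e f g h i : {mpoly R[12]}) v :
  (det3 a b c d e f g h i).@[v] = det3 a.@[v] b.@[v] c.@[v] d.@[v] e.@[v] f.@[v] g.@[v] h.@[v] i.@[v].
Proof. by rewrite /det3 !(mevalD, mevalN, mevalM). Qed.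

Lemma keyv (A : 'M[R]_2) a v :
  (Vpoly R).@[affine_map A a v] = (\det A)^+2 * (Vpoly R).@[v].
Proof.
rewrite VpolyE !ev_det3v !evW !evU !evV.
rewrite !affc !affd !(xcE v) !(xdE v) det2E /= /det3.
have m1 : (1 %% 3 = 1)%N by [].
have m2 : ((1 + 1) %% 3 = 2)%N by [].
rewrite ?m1 ?m2 /=.
ring.
Qed.
End K.

Theorem lemma3 (R : realFieldType) (A : 'M[R]_2) (a : 'cV[R]_2)
    (hA : A \in unitmx) (x : 'I_12 -> R) :
  singular_point (affine_map A a x) <-> singular_point x.
Proof.
have dA : \det A != 0 by rewrite -unitfE -unitmxE.
have d2 : (\det A)^+2 != 0 by rewrite expf_neq0.
have hk : forall k : 'I_12, exists j, k = cidx j \/ k = didx j.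
  move=> k; case: (splitP (k : 'I_(6 + 6))) => j hj; exists j.
    by left; apply: val_inj; rewrite /= hj.
  by right; apply: val_inj; rewrite /= hj.
split=> -[h0 h1]; split.
- have := keyv R A a x; rewrite h0 => /esym/eqP.
  by rewrite mulf_eq0 (negbTE d2) => /eqP.
- move=> k; case: (hk k) => j [->|->]; apply: (mulIf d2).
    by rewrite mul0r mulrC (keyc R A a) !h1 !mulr0 addr0.
  by rewrite mul0r mulrC (keyd R A a) !h1 !mulr0 addr0.
- by rewrite keyv h0 mulr0.
- move=> k.
  have H : forall j, ((Vpoly R)^`M(cidx j)).@[affine_map A a x] = 0 /\
                     ((Vpoly R)^`M(didx j)).@[affine_map A a x] = 0.
    move=> j.
    have e1 := keyc R A a x j; have e2 := keyd R A a x j.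
    rewrite !h1 mulr0 in e1 e2.
    set gc := ((Vpoly R)^`M(cidx j)).@[affine_map A a x] in e1 e2 *.
    set gd := ((Vpoly R)^`M(didx j)).@[affine_map A a x] in e1 e2 *.
    rewrite det2E in dA.
    have Hc : (A 0 0 * A 1 1 - A 0 1 * A 1 0) * gc = 0.
      have -> : (A 0 0 * A 1 1 - A 0 1 * A 1 0) * gc = A 1 1 * (A 0 0 * gc + A 1 0 * gd) - A 1 0 * (A 0 1 * gc + A 1 1 * gd) by ring.
      by rewrite -e1 -e2 !mulr0 subr0.
    have Hd : (A 0 0 * A 1 1 - A 0 1 * A 1 0) * gd = 0.
      have -> : (A 0 0 * A 1 1 - A 0 1 * A 1 0) * gd = A 0 0 * (A 0 1 * gc + A 1 1 * gd) - A 0 1 * (A 0 0 * gc + A 1 0 * gd) by ring.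
      by rewrite -e1 -e2 !mulr0 subr0.
    move/eqP: Hc; move/eqP: Hd; rewrite !mulf_eq0 (negbTE dA) /= => /eqP -> /eqP ->.
    by [].
  by case: (hk k) => j [->|->]; case: (H j).
Qed.
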